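(* For every $n\ge1$ and every $\mu$, \[ E_{\mu+n-1}\,E_{\mu+n-2,1}\cdots E_{\mu+1,n-2}\,E_{\mu,n-1}\;\circ\;F_{\mu,n-1}\,F_{\mu+1,n-2}\cdots F_{\mu+n-2,1}\,F_{\mu+n-1} =[\mu+n][\mu+n-1]\cdots[\mu+1]\;\mathrm{Id}_{M(\mu+n)} . \]
   Context: Let $\mathbb{K}=\mathbb{C}(q,q^{\mu})$, where $q$ and $q^{\mu}$ are algebraically independent indeterminates; $[a]=\frac{q^{a}-q^{-a}}{q-q^{-1}}$. $V_1$ is the 2-dimensional $U_q(\mathfrak{sl}_2)$-module with basis $v_0,v_1$. For $\lambda=\mu+k$ ($k\in\mathbb{Z}$), the Verma module $M(\lambda)$ has $\mathbb{K}$-basis $v_0,v_1,\dots$ with $Kv_i=q^{\lambda-2i}v_i$, $Ev_i=[i]v_{i-1}$, $Fv_i=[\lambda-i]v_{i+1}$, $v_{-1}=0$. For each such $\lambda$, the linear maps $E_\lambda: M(\lambda)\otimes V_1\to M(\lambda+1)$ and $F_\lambda: M(\lambda+1)\to M(\lambda)\otimes V_1$ are defined by $E_\lambda(v_i\otimes v_0)=q^iv_i$, $E_\lambda(v_i\otimes v_1)=v_{i+1}$, $F_\lambda(v_i)=[\lambda+1-i]\,v_i\otimes v_0+q^{i-\lambda-1}[i]\,v_{i-1}\otimes v_1$. For $j\ge0$ set $E_{\lambda,j}=E_\lambda\otimes\mathrm{Id}_{V_1}^{\otimes j}: M(\lambda)\otimes V_1^{\otimes (j+1)}\to M(\lambda+1)\otimes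 V_1^{\otimes j}$ and $F_{\lambda,j}=F_\lambda\otimes\mathrm{Id}_{V_1}^{\otimes j}: M(\lambda+1)\otimes V_1^{\otimes j}\to M(\lambda)\otimes V_1^{\otimes(j+1)}$, with $E_{\lambda,0}=E_\lambda$, $F_{\lambda,0}=F_\lambda$. Compositions are read right to left. *)

(* Defs.v *)
(* K = C(q, q^mu) is realised as the fraction field of the
   bivariate polynomial ring C[q][Q] over C = R[i] (R = Stdlib reals), with
   q the inner and Q = q^mu the outer polynomial variable. *)
From HB Require Import structures.
From mathcomp Require Import all_boot all_order all_algebra.
From mathcomp Require complex.
Import complex.ComplexField.
From mathcomp Require Import fraction.
From mathcomp Require Import Rstruct.
Set Implicit Arguments. Unset Strict Implicit. Unset Printing Implicit Defensive.
Import Order.TTheory GRing.Theory Num.Theory.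
Local Open Scope ring_scope.

Notation CC := (complex.complex Rdefinitions.R).
Definition K := {fraction {poly {poly CC}}}.

Definition q : K := FracField.tofrac (('X : {poly CC})%:P : {poly {poly CC}}).
Definition qmu : K := FracField.tofrac ('X : {poly {poly CC}}).

Definition qpow (c k : int) : K := qmu ^ c * q ^ k.

(* quantum number [c*mu + k] = (q^a - q^-a)/(q - q^-1) with a = c*mu + k *)
Definition qnum (c k : int) : K :=
  (qpow c k - qpow (- c) (- k)) / (q - q^-1).

(* A basis vector of M(lambda) (x) V_1^{(x) j}: v_i (x) v_{b_1} (x) ... (x) v_{b_j},
   encoded as (i, [:: b_1; ...; b_j]) with false = v_0, true = v_1.
   A vector is a finite formal linear combination: a list of (coefficient, basis vector). *)
Definition term := (K * (nat * seq bool))%type.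
Definition vec := seq term.

Definition basis (i : nat) (w : seq bool) : vec := [:: (1, (i, w))].

Definition coef (v : vec) (i : nat) (w : seq bool) : K :=
  \sum_(t <- v | t.2 == (i, w)) t.1.

Definition linext (f : nat -> seq bool -> vec) (v : vec) : vec :=
  flatten [seq [seq (t.1 * s.1, s.2) | s <- f t.2.1 t.2.2] | t <- v].

(* E_{lambda,j} = E_lambda (x) Id^{(x) j}, on basis vectors
   v_i (x) v_b (x) rest  (lambda = mu + k; E_lambda does not depend on k). *)
Definition E_basis (k : int) (i : nat) (w : seq bool) : vec :=
  match w with
  | false :: rest => [:: (q ^ (i%:Z), (i, rest))]
  | true :: rest => [:: (1, (i.+1, rest))]
  | [::] => [::]  (* not in the domain; never used *)
  end.

(* F_{lambda,j} = F_lambda (x) Id^{(x) j}, lambda = mu + k: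
   v_i (x) rest |-> [lambda+1-i] v_i (x) v_0 (x) rest
                    + q^(i-lambda-1) [i] v_{i-1} (x) v_1 (x) rest   (v_{-1} = 0) *)
Definition F_basis (k : int) (i : nat) (rest : seq bool) : vec :=
  (qnum 1 (k + 1 - i%:Z), (i, false :: rest)) ::
  (if i is i'.+1 then [:: (qpow (-1) (i%:Z - k - 1) * qnum 0 i%:Z, (i', true :: rest))]
   else [::]).

Definition Emap (k : int) : vec -> vec := linext (E_basis k).
Definition Fmap (k : int) : vec -> vec := linext (F_basis k).

(* F_{mu,n-1} ... F_{mu+n-2,1} F_{mu+n-1} : apply F with k = n-1, n-2, ..., 0 *)
Definition Fchain (n : nat) (v : vec) : vec :=
  foldl (fun v k => Fmap k%:Z v) v (rev (iota 0 n)).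
(* E_{mu+n-1} ... E_{mu+1,n-2} E_{mu,n-1} : apply E with k = 0, 1, ..., n-1 *)
Definition Echain (n : nat) (v : vec) : vec :=
  foldl (fun v k => Emap k%:Z v) v (iota 0 n).

(* Main.v *)
Require Import Defs.
From mathcomp Require Import all_boot all_order all_algebra.
From mathcomp Require Import fraction ring.
Import GRing.Theory.
Local Open Scope ring_scope.

Lemma q_neq0 : q != 0.
Proof. by rewrite /q tofrac_eq0 polyC_eq0 polyX_eq0. Qed.
Lemma qmu_neq0 : qmu != 0.
Proof. by rewrite /qmu tofrac_eq0 polyX_eq0. Qed.

Lemma key_gen (F : fieldType) (Q x Y Z D : F) : Q != 0 -> x != 0 -> Y != 0 -> Z != 0 ->
  (Q * (Z * x / Y) - Q^-1 * (Y / (Z * x))) * D * Y +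
  Q^-1 * (Y / (Z * x)) * ((Y - Y^-1) * D) =
  (Q * (Z * x) - Q^-1 / (Z * x)) * D.
Proof. move=> hQ hx hY hZ. field. by rewrite hQ hx hY hZ. Qed.

Lemma key (k i : nat) :
  qnum 1 (k%:Z + 1 - i%:Z) * q ^ (i%:Z) + qpow (-1) (i%:Z - k%:Z - 1) * qnum 0 i%:Z
  = qnum 1 (k%:Z + 1).
Proof.
rewrite /qnum /qpow.
set a := k%:Z + 1.
have -> : i%:Z - k%:Z - 1 = i%:Z + - a by rewrite /a; ring.
have -> : - (a - i%:Z) = i%:Z + - a by ring.
rewrite /a !expfzDr ?q_neq0 // -!invr_expz !expr1z !expr0z !invr1 !mul1r.
have hY : q ^ i%:Z != 0 by rewrite expfz_neq0 ?q_neq0.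
have hZ : q ^ k%:Z != 0 by rewrite expfz_neq0 ?q_neq0.
have hQ := qmu_neq0. have hq := q_neq0.
rewrite (@expfzDr _ q k%:Z 1 hq) expr1z.
move: (q - q^-1)^-1 (q ^ i%:Z) (q ^ k%:Z) hY hZ => D Y Z hY hZ.
exact: (@key_gen K qmu q Y Z D hQ hq hY hZ).
Qed.





Definition pair (v : vec) (g : nat -> seq bool -> K) : K :=
  \sum_(t <- v) t.1 * g t.2.1 t.2.2.

Lemma pair_linext f v g : pair (linext f v) g = pair v (fun j u => pair (f j u) g).
Proof.
rewrite /pair; elim: v => [|t v IH]; first by rewrite /linext /= !big_nil.
rewrite /linext /= big_cat big_cons big_map /= -/(linext f v) IH; congr (_ + _).
rewrite big_distrr /=; apply: eq_bigr => s _; by rewrite mulrA.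
Qed.

Lemma pair_ext v g g' : (forall j u, g j u = g' j u) -> pair v g = pair v g'.
Proof. move=> H; rewrite /pair; apply: eq_bigr => t _; by rewrite H. Qed.

Lemma pair_scale v c g : pair v (fun j u => c * g j u) = c * pair v g.
Proof. rewrite /pair big_distrr; apply: eq_bigr => t _ /=; by rewrite mulrCA. Qed.

Lemma coef_pair v i w : coef v i w = pair v (fun j u => if (j, u) == (i, w) then 1 else 0).
Proof.
rewrite /coef /pair big_mkcond; apply: eq_bigr => [[c [j u]]] _.
change ((if (j,u) == (i,w) then c else 0) = c * (if (j,u) == (i,w) then 1 else 0)).
case: eqP => _.
rewrite mulr1. done. rewrite mulr0. done.
Qed.

Lemma EF_basis (m : nat) j u g :
  pair (F_basis m%:Z j u) (fun j' u' => pair (E_basis m%:Z j' u') g) = qnum 1 (m%:Z + 1) * g j u.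
Proof.
case: j => [|j].
  rewrite /pair /F_basis /E_basis /= !big_cons !big_nil /= !addr0.
  by rewrite expr0z mul1r.
rewrite /pair /F_basis /E_basis /= !big_cons !big_nil /= !addr0 mul1r.
by rewrite mulrA -mulrDl (key m j.+1).
Qed.

Lemma main_pair (m : nat) v g :
  pair (Echain m (Fchain m v)) g = (\prod_(1 <= m' < m.+1) qnum 1 m'%:Z) * pair v g.
Proof.
elim: m v g => [|m IH] v g.
  by rewrite /Echain /Fchain /= big_geq // mul1r.
have eF : Fchain m.+1 v = Fchain m (Fmap m%:Z v).
  by rewrite /Fchain -addn1 iotaD /= rev_cat /=.
have eE : forall x, Echain m.+1 x = Emap m%:Z (Echain m x).
  by move=> x; rewrite /Echain -addn1 iotaD foldl_cat /=.
rewrite eE eF /Emap pair_linext IH /Fmap pair_linext.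
rewrite (@pair_ext _ _ (fun j u => qnum 1 (m%:Z + 1) * g j u)); last first.
  by move=> j u; rewrite EF_basis.
rewrite pair_scale mulrA; congr (_ * _).
rewrite [RHS]big_nat_recr //=; congr (_ * _).
by rewrite -addn1 PoszD.
Qed.

Theorem mainTheorem4 (n : nat) : (1 <= n)%N ->
  forall (i i' : nat) (w : seq bool),
    coef (Echain n (Fchain n (basis i [::]))) i' w =
    (if (i', w) == (i, [::]) then \prod_(1 <= m < n.+1) qnum 1 m%:Z else 0).
Proof.
move=> _ i i' w.
rewrite coef_pair main_pair /pair /basis big_cons big_nil /= addr0 mul1r eq_sym.
case: eqP => _.
  rewrite mulr1. done.
rewrite mulr0. done.
Qed.
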